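(* Let $mG$ be a finite canonical misinformation game, $\Gamma=(\mathcal{AD}^*(\{mG\}),E)$ its adaptation graph, and $\Gamma'$ its loopless version. Then $mG$ is the only source node of $\Gamma'$, i.e., $mG$ is the only vertex of $\Gamma'$ with in-degree $d^-_{\Gamma'}(mG)=0$.
   Context: A normal-form game is $G=\langle N,S,P\rangle$ with finite players $N$, finite pure strategy sets $S_i$, positions $S=\times_i S_i$, payoffs $P_i:S\to\mathbb{R}$. A misinformation game $mG=\langle G^0,G^1,\dots,G^{|N|}\rangle$ consists of the actual game $G^0$ and subjective games $G^i$; it is canonical if all $G^i=\langle N,S,P^i\rangle$ differ from $G^0$ only in payoffs and in every $G^i$ all players have equally many pure strategies. $NME(mG)$ is the set of profiles $\sigma=(\sigma_1,\dots,\sigma_{|N|})$ such that each $\sigma_i$ is player $i$'s component of some Nash equilibrium of $G^i$. $\chi(\sigma)=\mathrm{supp}(\sigma_1)\times\dots\times\mathrm{supp}(\sigma_{|N|})$. For $\vec v\in S$, $mG_{\vec v}$ is obtained by replacing, in every $P^i$ ($i\ge1$), the payoff vector at position $\vec v$ by $P^0(\vec v)$. For a set $M$ of misinformation games, $\mathcal{AD}(M)=\{mG_{\vec u}: mG\in M,\sigma\in NME(mG),\vec u\in\chi(\sigma)\}$, $\mathcal{AD}^{(0)}(M)=M$, $\mathcal{AD}^{(t+1)}(M)=\mathcal{AD}^{(t)}(\mathcal{AD}(M))$, $\mathcal{AD}^*(M)=\bigcup_{t\ge0}\mathcal{AD}^{(t)}(M)$. The adaptation graph $\Gamma$ is the directed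 graph with vertex set $\mathcal{AD}^*(\{mG\})$ and an edge $(mG^1,mG^2)$ iff $mG^2=(mG^1)_{\vec v}$ for some $\sigma\in NME(mG^1)$ and $\vec v\in\chi(\sigma)$. Its loopless version $\Gamma'$ has the same vertices and the edges of $\Gamma$ with $mG^1\neq mG^2$. *)

(* Defs.v *)
From HB Require Import structures.
From mathcomp Require Import all_boot all_order all_algebra.
Set Implicit Arguments. Unset Strict Implicit. Unset Printing Implicit Defensive.
Import Order.TTheory GRing.Theory Num.Theory.
Local Open Scope ring_scope.

(* Canonical misinformation games with players 'I_n, every player having the
   pure strategy set 'I_k in every game (G^0 and all G^i). *)
Section MG.
Variables (R : realFieldType) (n k : nat).

Definition position := {ffun 'I_n -> 'I_k}.
Definition payoff := {ffun position -> {ffun 'I_n -> R}}.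

Record mgame := MGame { act : payoff ; subj : {ffun 'I_n -> payoff} }.

Definition mixed := {ffun 'I_k -> R}.
Definition is_mixed (x : mixed) : Prop := (forall s, 0 <= x s) /\ \sum_s x s = 1.
Definition profile := {ffun 'I_n -> mixed}.

Definition exp_payoff (P : payoff) (sig : profile) (j : 'I_n) : R :=
  \sum_(p : position) (\prod_(i < n) sig i (p i)) * P p j.

Definition replace (sig : profile) (j : 'I_n) (tau : mixed) : profile :=
  [ffun i => if i == j then tau else sig i].

Definition is_NE (P : payoff) (sig : profile) : Prop :=
  (forall i, is_mixed (sig i)) /\
  forall j (tau : mixed), is_mixed tau ->
    exp_payoff P (replace sig j tau) j <= exp_payoff P sig j.

Definition NME (mG : mgame) (sig : profile) : Prop :=
  forall i, exists tau, is_NE (subj mG i) tau /\ sig i = tau i.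

Definition in_chi (sig : profile) (v : position) : Prop :=
  forall i, sig i (v i) != 0.

Definition adapt (mG : mgame) (v : position) : mgame :=
  MGame (act mG)
        [ffun i => [ffun p => if p == v then act mG v else subj mG i p]].

Definition ad_edge (mG1 mG2 : mgame) : Prop :=
  exists sig v, [/\ NME mG1 sig, in_chi sig v & mG2 = adapt mG1 v].

Definition AD (M : mgame -> Prop) : mgame -> Prop :=
  fun x => exists y, M y /\ ad_edge y x.

Fixpoint ADn (t : nat) (M : mgame -> Prop) : mgame -> Prop :=
  match t with 0 => M | t'.+1 => ADn t' (AD M) end.

Definition ADstar (M : mgame -> Prop) : mgame -> Prop :=
  fun x => exists t, ADn t M x.

Definition vertex (mG : mgame) : mgame -> Prop := ADstar (fun x => x = mG).

Definition gamma_edge (mG : mgame) (x y : mgame) : Prop :=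
  [/\ vertex mG x, vertex mG y & ad_edge x y].

Definition gamma'_edge (mG : mgame) (x y : mgame) : Prop :=
  gamma_edge mG x y /\ x <> y.

Definition source' (mG : mgame) (x : mgame) : Prop :=
  vertex mG x /\ ~ (exists y, gamma'_edge mG y x).

End MG.

(* Main.v *)
Require Import Defs.
From mathcomp Require Import all_boot all_order all_algebra.
From Stdlib Require Import Classical.

Section S.
Variables (R : realFieldType) (n k : nat).

Definition Inv (m0 z : mgame R n k) : Prop :=
  act z = act m0 /\ forall i p, subj z i p = subj m0 i p \/ subj z i p = act m0 p.

Lemma inv_edge m0 y z : Inv m0 y -> ad_edge y z -> Inv m0 z.
Proof.
move=> [Ha Hs] [sig [v [_ _ ->]]]; split => //= i p.
rewrite !ffunE; case: eqP => [->|_]; last exact: Hs.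
by right; rewrite Ha.
Qed.

Lemma inv_ADn m0 t : forall (M : mgame R n k -> Prop) y,
  ADn t M y -> (forall z, M z -> Inv m0 z) -> Inv m0 y.
Proof.
elim: t => [|t IH] M y /= Hy HM; first exact: HM.
apply: (IH _ _ Hy) => z [w [Mw Ew]]; exact: inv_edge (HM _ Mw) Ew.
Qed.

Lemma ADn_pred t : forall (M : mgame R n k -> Prop) x, ADn t M x ->
  M x \/ exists y, ADstar M y /\ ad_edge y x /\ y <> x.
Proof.
elim: t => [|t IH] M x /= Hx; first by left.
case: (IH _ _ Hx) => [[y [My Ey]]|[y [[s Hs] [Ey Ny]]]].
  case: (classic (y = x)) => [<-|Ny]; first by left.
  by right; exists y; split => //; exists 0%N.
by right; exists y; split => //; exists s.+1.
Qed.

End S.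

Theorem proposition18 (R : realFieldType) (n k : nat) (mG : mgame R n k) :
  forall x : mgame R n k, source' mG x <-> x = mG.
Proof.
move=> x; split.
  move=> [[t Ht] Hno].
  case: (@ADn_pred R n k t _ _ Ht) => // [[y [Vy [Ey Ny]]]].
  exfalso; apply: Hno; exists y; split => //; split => //; exists t; exact: Ht.
move=> ->; split; first by exists 0%N.
move=> [y [[[t Vy] _ [sig [v [_ _ Ey]]]] Ny]]; apply: Ny.
have [Ha Hs] := @inv_ADn R n k mG t _ _ Vy (fun z (e : z = mG) => ltac:(rewrite e; split => //; by left)).
clear Vy; case: y Ha Hs Ey => ay sy /= Ha Hs Ey.
have Hsub : subj mG = subj (adapt (MGame ay sy) v) by rewrite -Ey.
have Hact : act mG = ay by rewrite Ey.
rewrite [in RHS]Ey; congr MGame; apply/ffunP => i; apply/ffunP => p.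
rewrite /= !ffunE; case: eqP => [->|//].
have := f_equal (fun f : {ffun 'I_n -> payoff R n k} => f i v) Hsub; rewrite /= !ffunE eqxx => Hv.
by case: (Hs i v) => ->; rewrite ?Hv ?Ha.
Qed.
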